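(* Let $d:a\mapsto a'$ be a Hardy type series derivation on $\mathbb{K}$. Let $a\in\mathbb{K}^*$ with $a\not\asymp\hat\theta$, and set $\alpha=\mathrm{LM}(a)$. Let $\psi_\alpha\in\Phi$ be the unique fundamental monomial with $\mathrm{LF}(\alpha/\theta^{(\psi_\alpha)})=\psi_\alpha$, and put $$m=\frac{\alpha}{\mathrm{LE}\!\left(\alpha/\theta^{(\psi_\alpha)}\right)\,\mathrm{LT}\!\left(\psi_\alpha'/\psi_\alpha\right)}.$$ Then $m$ is an asymptotic integral of $\alpha$, namely $\mathrm{LT}(m')=\alpha$, and $\mathrm{LC}(a)\,m$ is an asymptotic integral of $a$, namely $\mathrm{LT}\big((\mathrm{LC}(a)m)'\big)=\mathrm{LT}(a)$. (These are denoted $\mathrm{a.i.}(\alpha)=m$ and $\mathrm{a.i.}(a)=\mathrm{LC}(a)\,\mathrm{a.i.}(\alpha)$.)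
   Context: Let $(\Phi,\preccurlyeq)$ be a totally ordered set; $\mathbf{H}(\Phi)$ is the group of formal products $\gamma=\prod_{\phi}\phi^{\gamma_\phi}$, $\gamma_\phi\in\mathbb{R}$, with anti-well-ordered support $\operatorname{supp}\gamma$, pointwise multiplication and anti-lexicographic order ($\gamma\succ1$ iff the exponent of $\max\operatorname{supp}\gamma$ is positive); $\Phi\subseteq\mathbf H(\Phi)$ via $\phi=\phi^1$. Fix a subgroup $\Gamma\supseteq\Phi$. For $1\ne\gamma$: $\mathrm{LF}(\gamma)=\max\operatorname{supp}\gamma$, $\mathrm{LE}(\gamma)=\gamma_{\mathrm{LF}(\gamma)}$. $\mathbb{K}=\mathbb{R}((\Gamma))$: formal series with anti-well-ordered support in $\Gamma$; for $a\ne0$, $\mathrm{LM}(a)$ is the largest monomial of the support, $\mathrm{LC}(a)$ its coefficient, $\mathrm{LT}(a)=\mathrm{LC}(a)\mathrm{LM}(a)$; $a\preccurlyeq b$ iff $\mathrm{LM}(a)\preccurlyeq\mathrm{LM}(b)$, $a\asymp b$ iff equal leading monomials; $|a|=\max(\mathrm{LM}(a),\mathrm{LM}(a)^{-1})$; $a,b\succ1$ comparable iff $\mathrm{LF}(\mathrm{LM}(a))=\mathrm{LF}(\mathrm{LM}(b))$. Summable families: union of supports anti-well-ordered, each monomial in finitely many supports. Series derivation: map $a\mapsto a'$ with $1'=0$, $\alpha'=\alpha\sum_{\phi\in\operatorname{supp}\alpha}\alpha_\phi\phi'/\phi$, $a'=\sum a_\alpha\alpha'$ (summable families). Hardy type: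 (HD1) constants $=\mathbb{R}$; (HD2) for $a,b\in\mathbb{K}^*$, $a,b\not\asymp1$: $a\preccurlyeq b\iff a'\preccurlyeq b'$; (HD3) for $|a|\succ|b|\succ1$: $a'/a\succcurlyeq b'/b$, with $\asymp$ iff $a,b$ comparable. $\theta^{(\phi)}=\mathrm{LM}(\phi'/\phi)$; $\hat\theta$ is the greatest lower bound of $\{\theta^{(\phi)}:\phi\in\Phi\}$ in $\Gamma$ if it exists (the condition $a\not\asymp\hat\theta$ is vacuous otherwise). For $\alpha\in\Gamma$, $\alpha\neq\hat\theta$, a unique $\psi_\alpha\in\Phi$ with $\mathrm{LF}(\alpha/\theta^{(\psi_\alpha)})=\psi_\alpha$ exists. $b$ is an asymptotic integral of $a$ if $b'\sim a$, i.e. $\mathrm{LT}(b')=\mathrm{LT}(a)$. *)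

(* Defs.v *)
From mathcomp Require Import all_boot all_order all_algebra.
From mathcomp Require Import all_classical all_reals.
Import Order.TTheory GRing.Theory Num.Theory.

Set Implicit Arguments.
Unset Strict Implicit.
Unset Printing Implicit Defensive.

Local Open Scope classical_set_scope.
Local Open Scope ring_scope.

Section Hahn.
Variables (d : Order.disp_t) (Phi : orderType d) (R : realType).

Definition anti_wo {T : Type} (le : T -> T -> Prop) (S : set T) : Prop :=
  forall A : set T, A `<=` S -> A !=set0 ->
    exists2 m, A m & forall x, A x -> le x m.

(** elements of H(Phi): gamma = prod_phi phi^(gamma phi), stored as the
    exponent function (well-formedness [isH] = anti-well-ordered support) *)
Definition hexp := Phi -> R.
Definition hsupp (g : hexp) : set Phi := [set p | g p != 0].
Definition isH (g : hexp) : Prop := anti_wo (fun x y => (x <= y)%O) (hsupp g).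
Definition hone : hexp := fun _ => 0.
Definition hmul (g h : hexp) : hexp := fun p => g p + h p.
Definition hinv (g : hexp) : hexp := fun p => - g p.
Definition hdiv (g h : hexp) : hexp := hmul g (hinv h).
Definition fund (p : Phi) : hexp := fun q => if q == p then 1 else 0.

Definition is_LF (g : hexp) (p : Phi) : Prop :=
  g p != 0 /\ forall q, g q != 0 -> (q <= p)%O.
Definition LE (g : hexp) : R := xget 0 [set e | exists p, is_LF g p /\ g p = e].

Definition hgt1 (g : hexp) : Prop := exists p, is_LF g p /\ 0 < g p.
Definition hlt (g h : hexp) : Prop := hgt1 (hdiv h g).
Definition hle (g h : hexp) : Prop := g = h \/ hlt g h.
Definition hmax (g h : hexp) : hexp := if pselect (hle h g) then g else h.

Definition value_group (G : set hexp) : Prop :=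
  (forall g, G g -> isH g) /\ G hone /\
  (forall g h, G g -> G h -> G (hmul g h)) /\
  (forall g, G g -> G (hinv g)) /\
  (forall p, G (fund p)).

(** formal series with coefficients in R and monomials in H(Phi);
    K = R((Gamma)) is the set of those satisfying [isK G] *)
Definition series := hexp -> R.
Definition ssupp (a : series) : set hexp := [set g | a g != 0].
Definition isK (G : set hexp) (a : series) : Prop :=
  ssupp a `<=` G /\ anti_wo hle (ssupp a).
Definition s0 : series := fun _ => 0.
Definition smon (c : R) (g : hexp) : series :=
  fun h => if pselect (h = g) then c else 0.
Definition sscale (c : R) (a : series) : series := fun h => c * a h.
Definition smulm (a : series) (g : hexp) : series := fun h => a (hdiv h g).

Definition is_LM (a : series) (g : hexp) : Prop :=
  a g != 0 /\ forall h, a h != 0 -> hle h g.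
Definition LM (a : series) : hexp := xget hone [set g | is_LM a g].
Definition LC (a : series) : R := a (LM a).
Definition LT (a : series) : series := smon (LC a) (LM a).
Definition sle (a b : series) : Prop := hle (LM a) (LM b).
Definition sabs (a : series) : hexp := hmax (LM a) (hinv (LM a)).
Definition comparable (a b : series) : Prop :=
  exists p, is_LF (LM a) p /\ is_LF (LM b) p.

Definition summable {I : Type} (S : set I) (F : I -> series) : Prop :=
  anti_wo hle (\bigcup_(i in S) ssupp (F i)) /\
  forall g, finite_set [set i | S i /\ F i g != 0].
Definition ssum {I : choiceType} (S : set I) (F : I -> series) : series :=
  fun g => \sum_(i \in S) F i g.

Definition series_derivation (G : set hexp) (D : series -> series) : Prop :=
  (forall a, isK G a -> isK G (D a)) /\
  D (smon 1 hone) = s0 /\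
  (forall al, G al ->
     let F := fun p => sscale (al p) (smulm (D (smon 1 (fund p))) (hinv (fund p))) in
     summable (hsupp al) F /\ D (smon 1 al) = smulm (ssum (hsupp al) F) al) /\
  (forall a, isK G a ->
     let F := fun g => sscale (a g) (D (smon 1 g)) in
     summable (ssupp a) F /\ D a = ssum (ssupp a) F).

(** Hardy type: (HD1), (HD2), (HD3). In (HD3), a'/a >= b'/b is expressed
    via leading monomials: LM(a'/a) = LM(a')/LM(a). *)
Definition hardy_type (G : set hexp) (D : series -> series) : Prop :=
  series_derivation G D /\
  (forall a, isK G a -> (D a = s0 <-> exists c : R, a = smon c hone)) /\
  (forall a b, isK G a -> isK G b -> a <> s0 -> b <> s0 ->
     LM a <> hone -> LM b <> hone ->
     (sle a b <-> sle (D a) (D b))) /\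
  (forall a b, isK G a -> isK G b -> a <> s0 -> b <> s0 ->
     hlt (sabs b) (sabs a) -> hlt hone (sabs b) ->
     hle (hdiv (LM (D b)) (LM b)) (hdiv (LM (D a)) (LM a)) /\
     (hdiv (LM (D a)) (LM a) = hdiv (LM (D b)) (LM b) <-> comparable a b)).

Definition dlog (D : series -> series) (p : Phi) : series :=
  smulm (D (smon 1 (fund p))) (hinv (fund p)).
Definition theta (D : series -> series) (p : Phi) : hexp := LM (dlog D p).

Definition is_theta_hat (G : set hexp) (D : series -> series) (t : hexp) : Prop :=
  G t /\ (forall p, hle t (theta D p)) /\
  (forall y, G y -> (forall p, hle y (theta D p)) -> hle y t).

Definition ai_mon (D : series -> series) (al : hexp) (psi : Phi) : series :=
  smon (LE (hdiv al (theta D psi)) * LC (dlog D psi))^-1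
       (hdiv al (theta D psi)).

End Hahn.
Arguments s0 {d Phi R}.
Arguments hone {d Phi R}.

(* Main.v *)
Require Import Defs.
From mathcomp Require Import all_boot all_order all_algebra.
From mathcomp Require Import all_classical all_reals.
From mathcomp Require Import ring.
Import Order.TTheory GRing.Theory Num.Theory.

Set Implicit Arguments.
Unset Strict Implicit.
Unset Printing Implicit Defensive.

Section Aux.
Local Open Scope classical_set_scope.
Local Open Scope ring_scope.
Variables (d : Order.disp_t) (Phi : orderType d) (R : realType).
Implicit Types (g h k : hexp Phi R) (x : series Phi R).

Lemma is_LF_uniq g p q : is_LF g p -> is_LF g q -> p = q.
Proof. by move=> [gp Hp] [gq Hq]; apply/le_anti; rewrite Hq // Hp. Qed.

Lemma hgt1_mul g h : hgt1 g -> hgt1 h -> hgt1 (hmul g h).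
Proof.
move=> [p [[gp Hp] pp]] [q [[hq Hq] pq]].
have Hr r : hmul g h r != 0 -> (r <= p)%O \/ (r <= q)%O.
  rewrite /hmul; case: (eqVneq (g r) 0) => [->|/Hp]; last by left.
  by rewrite add0r => /Hq; right.
case: (ltgtP p q) => [pq'|qp|E]; last subst q.
- have gq0 : g q = 0 by apply/eqP; apply: contraTT pq' => /Hp; rewrite leNgt => ->.
  exists q; split; [split|]; rewrite /hmul ?gq0 ?add0r ?(gt_eqF pq) //.
  by move=> r /Hr [] // rp; apply: le_trans rp (ltW pq').
- have hp0 : h p = 0 by apply/eqP; apply: contraTT qp => /Hq; rewrite leNgt => ->.
  exists p; split; [split|]; rewrite /hmul ?hp0 ?addr0 ?(gt_eqF pp) //.
  by move=> r /Hr [] // rq; apply: le_trans rq (ltW qp).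
- exists p; have s : 0 < g p + h p by rewrite addr_gt0.
  split; [split|] => //; first by rewrite /hmul gt_eqF.
  by move=> r /Hr [].
Qed.

Lemma hlt_trans g h k : hlt g h -> hlt h k -> hlt g k.
Proof.
rewrite /hlt => H1 H2.
have -> : hdiv k g = hmul (hdiv k h) (hdiv h g).
  by apply: funext => p; rewrite /hdiv /hmul /hinv; ring.
exact: hgt1_mul.
Qed.

Lemma hlt_irr g : ~ hlt g g.
Proof. by move=> [p [[/eqP H _] _]]; apply: H; rewrite /hdiv /hmul /hinv subrr. Qed.

Lemma hle_refl g : hle g g.
Proof. by left. Qed.

Lemma hle_trans g h k : hle g h -> hle h k -> hle g k.
Proof.
case=> [->//|H1]; case=> [<-|H2]; right => //; exact: hlt_trans H1 H2.
Qed.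

Lemma hle_lt_trans g h k : hle g h -> hlt h k -> hlt g k.
Proof. by move=> [->//|H1] H2; apply: hlt_trans H1 H2. Qed.

Lemma hlt_le_trans g h k : hlt g h -> hle h k -> hlt g k.
Proof. by move=> H1 [<-//|H2]; apply: hlt_trans H1 H2. Qed.

Lemma hle_anti g h : hle g h -> hle h g -> g = h.
Proof.
move=> [//|H1] [//|H2]; exfalso; exact: hlt_irr (hlt_trans H1 H2).
Qed.

Lemma hle_shift g h k : hle g h -> hle (hmul g k) (hmul h k).
Proof.
move=> [->|H]; first by left.
right; rewrite /hlt.
have -> : hdiv (hmul h k) (hmul g k) = hdiv h g.
  by apply: funext => p; rewrite /hdiv /hmul /hinv; ring.
exact: H.
Qed.

Lemma is_LM_uniq x g h : is_LM x g -> is_LM x h -> g = h.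
Proof. by move=> [xg Hg] [xh Hh]; apply: hle_anti; [apply: Hh|apply: Hg]. Qed.

Lemma LM_eq x g : is_LM x g -> LM x = g.
Proof. by move=> H; apply: xget_unique => // y Hy; apply: is_LM_uniq Hy H. Qed.

Lemma is_LM_smulm x g h : is_LM x g -> is_LM (smulm x h) (hmul g h).
Proof.
have E u : hdiv (hmul u h) h = u.
  by apply: funext => p; rewrite /hdiv /hmul /hinv; ring.
move=> [xg Hg]; split; first by rewrite /smulm E.
move=> k /Hg H; have := hle_shift h H.
suff -> : hmul (hdiv k h) h = k by [].
by apply: funext => p; rewrite /hdiv /hmul /hinv; ring.
Qed.

Lemma is_LM_sscale x g c : c != 0 -> is_LM x g -> is_LM (sscale c x) g.
Proof.
move=> c0 [xg Hg]; split; first by rewrite /sscale mulf_neq0.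
by move=> h; rewrite /sscale mulf_eq0 negb_or => /andP[_ /Hg].
Qed.

Lemma LM_exists (G : set (hexp Phi R)) x : isK G x -> x <> s0 -> exists g, is_LM x g.
Proof.
move=> [_ wo] x0.
have [g xg] : exists g, x g != 0.
  apply: contrapT => H; apply: x0; apply: funext => g.
  by apply/eqP; apply: contrapT => /negP xg; apply: H; exists g.
have [m Am Hm] := wo (ssupp x) (fun _ hh => hh) (ex_intro _ g xg).
by exists m; split.
Qed.

Lemma fsum_only (I : choiceType) (A : set I) (F : I -> R) j :
  A j -> (forall i, A i -> i <> j -> F i = 0) -> \sum_(i \in A) F i = F j.
Proof.
move=> Aj H; rewrite -(fsbig_widen [set j] A F) ?fsbig_set1 //.
  by move=> i ->.
by move=> i [Ai /= ij]; apply: H.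
Qed.

End Aux.

Section Main.
Local Open Scope classical_set_scope.
Local Open Scope ring_scope.
Variables (d : Order.disp_t) (Phi : orderType d) (R : realType).
Variables (G : set (hexp Phi R)) (D : series Phi R -> series Phi R).
Hypotheses (vg : value_group G) (hd : hardy_type G D).
Implicit Types (g h k : hexp Phi R) (x : series Phi R).

Lemma G_mul g h : G g -> G h -> G (hmul g h).
Proof. by case: vg => _ [_ [H _]]; apply: H. Qed.
Lemma G_inv g : G g -> G (hinv g).
Proof. by case: vg => _ [_ [_ [H _]]]; apply: H. Qed.
Lemma G_fund (p : Phi) : G (fund R p).
Proof. by case: vg => _ [_ [_ [_ H]]]; apply: H. Qed.

Lemma smon_at c g : smon c g g = c.
Proof. by rewrite /smon; case: pselect. Qed.
Lemma smon_off c g h : h <> g -> smon c g h = 0.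
Proof. by rewrite /smon; case: pselect. Qed.
Lemma smon_supp c g h : smon c g h != 0 -> h = g.
Proof. by case: (pselect (h = g)) => // /smon_off ->; rewrite eqxx. Qed.

Lemma isK_smon c g : G g -> isK G (smon c g).
Proof.
move=> Gg; split; first by move=> h /smon_supp ->.
move=> A AS [x Ax]; have xg : x = g by apply: smon_supp (AS x Ax).
exists x => // y Ay; left; rewrite xg; exact: smon_supp (AS y Ay).
Qed.

Lemma is_LM_smon c g : c != 0 -> is_LM (smon c g) g.
Proof.
move=> c0; split; first by rewrite smon_at.
by move=> h /smon_supp ->; left.
Qed.

Lemma smon_neq0 c g : c != 0 -> smon c g <> s0.
Proof.
move=> c0 E; have := congr1 (fun f => f g) E; rewrite smon_at /s0 => c00.
by move: c0; rewrite c00 eqxx.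
Qed.

Lemma fund_neq1 (p : Phi) : fund R p <> hone.
Proof.
move=> E; have := congr1 (fun f => f p) E; rewrite /fund /hone eqxx => /eqP.
by rewrite oner_eq0.
Qed.

Lemma isK_D x : isK G x -> isK G (D x).
Proof. by case: hd => [[H _] _]; apply: H. Qed.

Lemma D_fund_neq0 (p : Phi) : D (smon 1 (fund R p)) <> s0.
Proof.
case: hd => _ [HD1 _] E.
have [c Ec] := (HD1 _ (isK_smon 1 (G_fund p))).1 E.
have := congr1 (fun f => f (fund R p)) Ec; rewrite smon_at smon_off.
  by move/eqP; rewrite oner_eq0.
exact: fund_neq1.
Qed.

Lemma theta_spec (p : Phi) : exists g, G g /\ is_LM (D (smon 1 (fund R p))) g /\
   theta D p = hdiv g (fund R p) /\ is_LM (dlog D p) (theta D p).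
Proof.
have K := isK_D (isK_smon 1 (G_fund p)).
have [g Hg] := LM_exists K (@D_fund_neq0 p).
have Gg : G g by case: K => + _; apply; case: Hg.
have H2 : is_LM (dlog D p) (hdiv g (fund R p)) by apply: is_LM_smulm.
by exists g; rewrite /theta (LM_eq H2).
Qed.

Lemma G_theta (p : Phi) : G (theta D p).
Proof.
have [g [Gg [_ [-> _]]]] := theta_spec p.
by apply: G_mul => //; apply: G_inv; apply: G_fund.
Qed.

Lemma fund_LF (p : Phi) : is_LF (fund R p) p.
Proof.
split; first by rewrite /fund eqxx oner_eq0.
move=> q; rewrite /fund; case: (q =P p) => [-> _|_]; [exact: lexx|by rewrite eqxx].
Qed.

Lemma fund_gt1 (p : Phi) : hgt1 (fund R p).
Proof.
exists p; split; last by rewrite /fund eqxx ltr01.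
split; first by rewrite /fund eqxx oner_eq0.
move=> q; rewrite /fund; case: (q =P p) => [-> _|_]; [exact: lexx|by rewrite eqxx].
Qed.

Lemma sabs_fund (r : Phi) : sabs (smon 1 (fund R r)) = fund R r.
Proof.
rewrite /sabs (LM_eq (@is_LM_smon 1 _ (oner_neq0 R))) /hmax.
case: pselect => // nH; exfalso; apply: nH; right; rewrite /hlt.
have -> : hdiv (fund R r) (hinv (fund R r)) = hmul (fund R r) (fund R r).
  by apply: funext => s; rewrite /hdiv /hmul /hinv opprK.
by apply: hgt1_mul; apply: fund_gt1.
Qed.

Lemma theta_lt (p q : Phi) : (p < q)%O -> hlt (theta D p) (theta D q).
Proof.
move=> pq.
have [gp [_ [Lp [Tp _]]]] := theta_spec p.
have [gq [_ [Lq [Tq _]]]] := theta_spec q.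
case: hd => _ [_ [_ HD3]].
have Ka := isK_smon 1 (G_fund q); have Kb := isK_smon 1 (G_fund p).
have H1 : hlt (sabs (smon 1 (fund R p))) (sabs (smon 1 (fund R q))).
  rewrite !sabs_fund /hlt; exists q; split; last first.
    by rewrite /hdiv /hmul /hinv /fund eqxx (gt_eqF pq) oppr0 addr0 ltr01.
  split; first by rewrite /hdiv /hmul /hinv /fund eqxx (gt_eqF pq) oppr0 addr0 oner_eq0.
  move=> r; rewrite /hdiv /hmul /hinv /fund; case: (r =P q) => [->//|_].
  by case: (r =P p) => [->|_]; rewrite ?oppr0 ?addr0 ?eqxx // => _; rewrite ltW.
have H2 : hlt hone (sabs (smon 1 (fund R p))).
  rewrite sabs_fund /hlt; have -> : hdiv (fund R p) hone = fund R p.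
    by apply: funext => s; rewrite /hdiv /hmul /hinv /hone oppr0 addr0.
  exact: fund_gt1.
have [Hle Hc] := HD3 _ _ Ka Kb (@smon_neq0 1 _ (oner_neq0 R)) (@smon_neq0 1 _ (oner_neq0 R)) H1 H2.
move: Hle Hc; rewrite (LM_eq (@is_LM_smon 1 (fund R p) (oner_neq0 R))) (LM_eq (@is_LM_smon 1 (fund R q) (oner_neq0 R))) (LM_eq Lp) (LM_eq Lq) -Tp -Tq.
move=> [E|//] [Hc _]; exfalso.
have [r [r1 r2]] := Hc (esym E).
move: r1 r2; rewrite (LM_eq (@is_LM_smon 1 (fund R p) (oner_neq0 R))) (LM_eq (@is_LM_smon 1 (fund R q) (oner_neq0 R))) => r1 r2.
have := is_LF_uniq r1 (fund_LF q); have := is_LF_uniq r2 (fund_LF p).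
by move=> -> E2; move: pq; rewrite E2 ltxx.
Qed.

Lemma D_smon1 g : G g ->
  D (smon 1 g) = smulm (ssum (hsupp g) (fun p => sscale (g p) (dlog D p))) g.
Proof. by move=> Gg; case: hd => [[_ [_ [H3 _]]] _]; have [_ E] := H3 g Gg. Qed.

Lemma D_smon c g : G g -> c != 0 -> D (smon c g) = sscale c (D (smon 1 g)).
Proof.
move=> Gg c0; case: hd => [[_ [_ [_ H4]]] _]; have [_ ->] := H4 _ (isK_smon c Gg).
apply: funext => h; rewrite /ssum /sscale.
rewrite (fsum_only (j:=g)); first by rewrite smon_at.
  by rewrite /ssupp /= smon_at.
by move=> i /smon_supp.
Qed.

Lemma LE_eq g (p : Phi) : is_LF g p -> LE g = g p.
Proof.
move=> Hp; rewrite /LE; apply: xget_unique; first by exists p.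
by move=> y [q [Hq <-]]; rewrite (is_LF_uniq Hq Hp).
Qed.

End Main.

Theorem mainTheorem5 (d : Order.disp_t) (Phi : orderType d) (R : realType)
    (G : set (hexp Phi R)) (D : series Phi R -> series Phi R)
    (a : series Phi R) (psi : Phi) :
  value_group G -> hardy_type G D ->
  isK G a -> a <> s0 -> ~ is_theta_hat G D (LM a) ->
  is_LF (hdiv (LM a) (theta D psi)) psi ->
  LT (D (ai_mon D (LM a) psi)) = smon 1%R (LM a) /\
  LT (D (sscale (LC a) (ai_mon D (LM a) psi))) = LT a.
Proof.
move=> vg hd Ka a0 _ LFb.
have [ga Hga] := LM_exists Ka a0.
have Gal : G (LM a) by rewrite (LM_eq Hga); case: Ka => + _; apply; case: Hga.
have LCa0 : (LC a != 0)%R by rewrite /LC (LM_eq Hga); case: Hga.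
have Gb : G (hdiv (LM a) (theta D psi)).
  by apply: G_mul => //; apply: G_inv => //; apply: G_theta.
have [g0 [_ [_ [_ Ht]]]] := theta_spec vg hd psi.
rewrite /ai_mon.
set t := theta D psi.
have LCt : LC (dlog D psi) = dlog D psi t by [].
rewrite LCt.
set b := hdiv (LM a) t.
have HLMi (i : Phi) : is_LM (dlog D i) (theta D i).
  by have [? [_ [_ [_ H]]]] := theta_spec vg hd i.
have Hsum : is_LM (ssum (hsupp b) (fun p => sscale (b p) (dlog D p))) t /\
   ssum (hsupp b) (fun p => sscale (b p) (dlog D p)) t = (b psi * dlog D psi t)%R.
  have tle (i : Phi) : hsupp b i -> hle (theta D i) t.
    move=> /LFb.2; rewrite le_eqVlt => /orP[/eqP ->|ilt]; first by left.
    by right; apply: (theta_lt vg hd ilt).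
  have Sval : ssum (hsupp b) (fun p => sscale (b p) (dlog D p)) t = (b psi * dlog D psi t)%R.
    rewrite /ssum /sscale (fsum_only (j:=psi)) //; first exact: LFb.1.
    move=> i Si ipsi.
    have ilt : (i < psi)%O by rewrite lt_neqAle LFb.2 // andbT; apply/eqP.
    have Hl := theta_lt vg hd ilt.
    case: (eqVneq (dlog D i t) 0%R) => [->|nz]; first by rewrite GRing.mulr0.
    exfalso; have H := (HLMi i).2 t nz; exact: hlt_irr (hle_lt_trans H Hl).
  split => //; split.
    by rewrite Sval GRing.mulf_neq0 //; [exact: LFb.1|case: Ht].
  move=> h Sh.
  have [i [Si]] : exists i, hsupp b i /\ (b i * dlog D i h != 0)%R.
    apply: contrapT => nE; move: Sh; rewrite /ssum /sscale fsbig1 ?eqxx // => i Si.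
    apply/eqP; apply: contrapT => /negP H; apply: nE; exists i; split => //.
  rewrite GRing.mulf_eq0 negb_or => /andP[_ nz].
  exact: hle_trans ((HLMi i).2 h nz) (tle i Si).
have HDb : is_LM (D (smon 1 b)) (LM a) /\ D (smon 1 b) (LM a) = (b psi * dlog D psi t)%R.
  rewrite (D_smon1 hd Gb).
  have E1 : hmul t b = LM a.
    by apply: funext => p; rewrite /b /hdiv /hmul /hinv; ring.
  have E2 : hdiv (LM a) b = t.
    by apply: funext => p; rewrite /b /hdiv /hmul /hinv; ring.
  split; first by have := is_LM_smulm b (proj1 Hsum); rewrite E1.
  by rewrite /smulm E2; case: Hsum.
have LTk k : (k != 0)%R -> LT (D (smon k b)) = smon (k * (b psi * dlog D psi t))%R (LM a).
  move=> k0; rewrite (D_smon hd Gb k0) /LT /LC.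
  have HL := is_LM_sscale k0 HDb.1.
  by rewrite (LM_eq HL) /sscale HDb.2.
have v0 : (b psi * dlog D psi t != 0)%R.
  by rewrite GRing.mulf_neq0 //; [exact: LFb.1|case: Ht].
rewrite (LE_eq LFb).
set c := ((b psi * dlog D psi t)^-1)%R.
have c0 : (c != 0)%R by rewrite GRing.invr_eq0.
split; first by rewrite LTk // GRing.mulVf.
have -> : sscale (LC a) (smon c b) = smon (LC a * c)%R b.
  apply: funext => h; rewrite /sscale; case: (pselect (h = b)) => [->|nh].
    by rewrite !smon_at.
  by rewrite !smon_off // GRing.mulr0.
by rewrite LTk ?GRing.mulf_neq0 // -GRing.mulrA GRing.mulVf // GRing.mulr1.
Qed.
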